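(* If $\bar x\in\operatorname{dom}\varphi$ is a local minimizer of $\varphi:\mathbb{R}^n\to(-\infty,\infty]$, then $0\in\partial\varphi(\bar x)$. If in addition $\varphi$ is prox-regular at $\bar x$ for $0$, then $$\langle z,w\rangle\ge0\quad\text{whenever } w\in\mathbb{R}^n \text{ and } z\in\breve\partial^2\varphi(\bar x,0)(w).$$
   Context: Regular subdifferential $\widehat\partial\varphi(x):=\{v:\liminf_{u\to x}\frac{\varphi(u)-\varphi(x)-\langle v,u-x\rangle}{\|u-x\|}\ge0\}$; limiting subdifferential $\partial\varphi(\bar x)$: all limits of $v_k\in\widehat\partial\varphi(x_k)$ with $x_k\to\bar x$, $\varphi(x_k)\to\varphi(\bar x)$. Regular normal cone $\widehat N_\Omega(\bar z):=\widehat\partial\delta_\Omega(\bar z)$ ($\delta_\Omega$ the indicator function). Regular coderivative of $F:\mathbb{R}^n\rightrightarrows\mathbb{R}^m$: $\widehat D^*F(\bar x,\bar y)(u):=\{v:(v,-u)\in\widehat N_{\operatorname{gph}F}(\bar x,\bar y)\}$. Combined second-order subdifferential: $\breve\partial^2\varphi(\bar x,\bar v)(u):=\widehat D^*(\partial\varphi)(\bar x,\bar v)(u)$. Prox-regularity of $\varphi$ at $\bar x$ for $\bar v\in\partial\varphi(\bar x)$: $\varphi$ finite and locally l.s.c. around $\bar x$, and there are $\varepsilon>0$, $r\ge0$ with $\varphi(x)\ge\varphi(u)+\langle v,x-u\rangle-\frac r2\|x-u\|^2$ for all $\|x-\bar x\|<\varepsilon$ and all $v\in\partial\varphi(u)$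 with $\|v-\bar v\|<\varepsilon$, $\|u-\bar x\|<\varepsilon$, $\varphi(u)<\varphi(\bar x)+\varepsilon$. *)

(* Defs.v *)
From HB Require Import structures.
From mathcomp Require Import all_boot all_order all_algebra.
From mathcomp Require Import boolp classical_sets reals constructive_ereal.
Set Implicit Arguments. Unset Strict Implicit. Unset Printing Implicit Defensive.
Import Order.TTheory GRing.Theory Num.Theory.
Local Open Scope ring_scope.
Local Open Scope classical_set_scope.

Section VarAnal.
Variable R : realType.

Definition dotv {n : nat} (u v : 'rV[R]_n) : R := \sum_(i < n) u 0 i * v 0 i.
Definition enorm {n : nat} (u : 'rV[R]_n) : R := Num.sqrt (dotv u u).

Definition cvgv {n : nat} (s : nat -> 'rV[R]_n) (a : 'rV[R]_n) : Prop :=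
  forall eps : R, 0 < eps -> exists N : nat, forall k, (N <= k)%N ->
    enorm (s k - a) < eps.

(* regular (Fréchet) subdifferential: v \in \hat\partial phi(x), the liminf
   condition written out in epsilon-delta form (phi(x) finite). *)
Definition reg_subdiff {n : nat} (phi : 'rV[R]_n -> \bar R) (x v : 'rV[R]_n) : Prop :=
  phi x \is a fin_num /\
  forall eps : R, 0 < eps -> exists delta : R, 0 < delta /\
    forall u, 0 < enorm (u - x) < delta ->
      (phi x + (dotv v (u - x) - eps * enorm (u - x))%:E <= phi u)%E.

Definition lim_subdiff {n : nat} (phi : 'rV[R]_n -> \bar R) (xbar v : 'rV[R]_n) : Prop :=
  phi xbar \is a fin_num /\
  exists (xs vs : nat -> 'rV[R]_n),
    (forall k, reg_subdiff phi (xs k) (vs k)) /\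
    cvgv xs xbar /\ cvgv vs v /\
    (forall eps : R, 0 < eps -> exists N : nat, forall k, (N <= k)%N ->
       (`| phi (xs k) - phi xbar | < eps%:E)%E).

Definition indic {n : nat} (O : set 'rV[R]_n) (z : 'rV[R]_n) : \bar R :=
  if z \in O then 0%E else +oo%E.

Definition reg_normal {n : nat} (O : set 'rV[R]_n) (z v : 'rV[R]_n) : Prop :=
  reg_subdiff (indic O) z v.

Definition gph {n m : nat} (F : 'rV[R]_n -> set 'rV[R]_m) : set 'rV[R]_(n + m) :=
  [set z | exists x y, z = row_mx x y /\ F x y].

Definition reg_coderiv {n m : nat} (F : 'rV[R]_n -> set 'rV[R]_m)
    (xbar : 'rV[R]_n) (ybar u : 'rV[R]_m) (v : 'rV[R]_n) : Prop :=
  reg_normal (gph F) (row_mx xbar ybar) (row_mx v (- u)).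

Definition comb_subdiff2 {n : nat} (phi : 'rV[R]_n -> \bar R)
    (xbar vbar u z : 'rV[R]_n) : Prop :=
  reg_coderiv (fun x => [set v | lim_subdiff phi x v]) xbar vbar u z.

Definition lsc_at {n : nat} (phi : 'rV[R]_n -> \bar R) (x : 'rV[R]_n) : Prop :=
  forall a : R, (a%:E < phi x)%E -> exists delta : R, 0 < delta /\
    forall u, enorm (u - x) < delta -> (a%:E < phi u)%E.

Definition local_minimizer {n : nat} (phi : 'rV[R]_n -> \bar R) (xbar : 'rV[R]_n) : Prop :=
  exists delta : R, 0 < delta /\
    forall x, enorm (x - xbar) < delta -> (phi xbar <= phi x)%E.

Definition prox_regular {n : nat} (phi : 'rV[R]_n -> \bar R) (xbar vbar : 'rV[R]_n) : Prop :=
  phi xbar \is a fin_num /\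
  (exists eps : R, 0 < eps /\ forall x, enorm (x - xbar) < eps -> lsc_at phi x) /\
  lim_subdiff phi xbar vbar /\
  exists (eps r : R), 0 < eps /\ 0 <= r /\
    forall x u v,
      enorm (x - xbar) < eps ->
      lim_subdiff phi u v -> enorm (v - vbar) < eps -> enorm (u - xbar) < eps ->
      (phi u < phi xbar + eps%:E)%E ->
      (phi u + (dotv v (x - u) - r / 2 * enorm (x - u) ^+ 2)%:E <= phi x)%E.

End VarAnal.

(* Main.v *)
Require Import Defs.
From HB Require Import structures.
From mathcomp Require Import all_boot all_order all_algebra.
From mathcomp Require Import boolp classical_sets reals constructive_ereal.
From mathcomp Require Import topology normedtype sequences ereal matrix_normedtype.
From mathcomp Require Import ring lra.
Import numFieldNormedType.Exports.
Import Order.TTheory GRing.Theory Num.Theory.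
Set Implicit Arguments. Unset Strict Implicit. Unset Printing Implicit Defensive.
Local Open Scope ring_scope.
Section Vec.
Variable R : realType.
Variable n : nat.
Implicit Types u v w : 'rV[R]_n.

Lemma dotvC u v : dotv u v = dotv v u.
Proof. by apply: eq_bigr => i _; rewrite mulrC. Qed.
Lemma dotvDl u u' v : dotv (u + u') v = dotv u v + dotv u' v.
Proof. by rewrite /dotv -big_split; apply: eq_bigr => i _; rewrite mxE mulrDl. Qed.
Lemma dotvNl u v : dotv (- u) v = - dotv u v.
Proof. by rewrite /dotv -sumrN; apply: eq_bigr => i _; rewrite mxE mulNr. Qed.
Lemma dotvZl a u v : dotv (a *: u) v = a * dotv u v.
Proof. by rewrite /dotv mulr_sumr; apply: eq_bigr => i _; rewrite mxE mulrA. Qed.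
Lemma dotvDr u v v' : dotv u (v + v') = dotv u v + dotv u v'.
Proof. by rewrite dotvC dotvDl !(dotvC u). Qed.
Lemma dotvNr u v : dotv u (- v) = - dotv u v.
Proof. by rewrite dotvC dotvNl dotvC. Qed.
Lemma dotvZr a u v : dotv u (a *: v) = a * dotv u v.
Proof. by rewrite dotvC dotvZl dotvC. Qed.
Lemma dotvBl u u' v : dotv (u - u') v = dotv u v - dotv u' v.
Proof. by rewrite dotvDl dotvNl. Qed.
Lemma dotvBr u v v' : dotv u (v - v') = dotv u v - dotv u v'.
Proof. by rewrite dotvDr dotvNr. Qed.
Lemma dotv0l v : dotv 0 v = 0.
Proof. by rewrite /dotv big1 // => i _; rewrite mxE mul0r. Qed.
Lemma dotv0r v : dotv v 0 = 0.
Proof. by rewrite dotvC dotv0l. Qed.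
Lemma dotv_ge0 u : 0 <= dotv u u.
Proof. by apply: sumr_ge0 => i _; rewrite -expr2 sqr_ge0. Qed.
Lemma enorm_ge0 u : 0 <= enorm u.
Proof. exact: sqrtr_ge0. Qed.
Lemma enorm_sq u : enorm u ^+ 2 = dotv u u.
Proof. by rewrite sqr_sqrtr // dotv_ge0. Qed.
Lemma enorm0 : enorm (0 : 'rV[R]_n) = 0.
Proof. by rewrite /enorm dotv0l sqrtr0. Qed.
Lemma enormN u : enorm (- u) = enorm u.
Proof. by rewrite /enorm dotvNl dotvNr opprK. Qed.
Lemma enormZ a u : enorm (a *: u) = `|a| * enorm u.
Proof. by rewrite /enorm dotvZl dotvZr mulrA -expr2 sqrtrM ?sqr_ge0 // sqrtr_sqr. Qed.
Lemma enormB u v : enorm (u - v) = enorm (v - u).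
Proof. by rewrite -enormN opprB. Qed.

Lemma disc_lemma (A B C : R) : 0 <= C -> (forall t, 0 <= A - 2 * t * B + t ^+ 2 * C) -> B ^+ 2 <= A * C.
Proof.
move=> HC0 H.
have HA : 0 <= A by have := H 0; lra.
have [C0|Cn0] := eqVneq C 0.
  have [B0|Bn0] := eqVneq B 0; first by rewrite B0 C0; nra.
  have := H ((A + 1) / (2 * B)); rewrite C0 mulr0 addr0.
  have -> : 2 * ((A + 1) / (2 * B)) * B = A + 1 by field; rewrite Bn0.
  lra.
have HC : 0 < C.
  by rewrite lt0r Cn0.
have := H (B / C).
have -> : A - 2 * (B / C) * B + (B / C) ^+ 2 * C = A - B ^+ 2 / C by field.
move=> h; have : B ^+ 2 / C <= A by lra.
by rewrite ler_pdivrMr.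
Qed.

Lemma cauchy_schwarz u v : dotv u v <= enorm u * enorm v.
Proof.
have H : dotv u v ^+ 2 <= dotv u u * dotv v v.
  apply: disc_lemma; first exact: dotv_ge0.
  move=> t.
  have := dotv_ge0 (u - t *: v).
  rewrite !dotvBl !dotvBr !dotvZl !dotvZr (dotvC v u).
  lra.
have := ler_norm (dotv u v).
rewrite -[`|dotv u v|]sqrtr_sqr /enorm -sqrtrM ?dotv_ge0 //.
move=> h; apply: le_trans h _; exact: ler_wsqrtr.
Qed.

Lemma enormD_sq u v : enorm (u + v) ^+ 2 = enorm u ^+ 2 + 2 * dotv u v + enorm v ^+ 2.
Proof. rewrite !enorm_sq !dotvDl !dotvDr (dotvC v u); ring. Qed.

Lemma enormD u v : enorm (u + v) <= enorm u + enorm v.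
Proof.
have h1 := cauchy_schwarz u v.
have h2 := enormD_sq u v.
have g1 := enorm_ge0 u; have g2 := enorm_ge0 v; have g3 := enorm_ge0 (u + v).
have : enorm (u + v) ^+ 2 <= (enorm u + enorm v) ^+ 2 by nra.
by rewrite ler_pXn2r // ?nnegrE; lra.
Qed.

Lemma enorm_coord u i : `|u 0 i| <= enorm u.
Proof.
rewrite /enorm -(sqrtr_sqr (u 0 i)); apply: ler_wsqrtr.
rewrite /dotv (bigD1 i) //= -expr2 lerDl.
by apply: sumr_ge0 => j _; rewrite -expr2 sqr_ge0.
Qed.

Lemma enorm_coord_bound u (r : R) : (forall i, `|u 0 i| <= r) -> enorm u ^+ 2 <= n%:R * r ^+ 2.
Proof.
move=> H; rewrite enorm_sq /dotv.
have -> : n%:R * r ^+ 2 = \sum_(i < n) r ^+ 2 by rewrite sumr_const card_ord mulr_natl.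
apply: ler_sum => i _; rewrite -expr2 -real_normK ?num_real //.
rewrite ler_pXn2r ?nnegrE //; last exact: le_trans (H i).
Qed.

End Vec.
Section Row.
Variable R : realType.
Variable n : nat.
Implicit Types a b c d : 'rV[R]_n.

Lemma dotv_row_mx a b c d : dotv (row_mx a b) (row_mx c d) = dotv a c + dotv b d.
Proof. by rewrite /dotv big_split_ord /=; congr (_ + _); apply: eq_bigr => i _; rewrite ?row_mxEl ?row_mxEr. Qed.

Lemma enorm_row_mx a b : enorm (row_mx a b) <= enorm a + enorm b.
Proof.
have g1 := enorm_ge0 a; have g2 := enorm_ge0 b; have g3 := enorm_ge0 (row_mx a b).
have h : enorm (row_mx a b) ^+ 2 = enorm a ^+ 2 + enorm b ^+ 2 by rewrite !enorm_sq dotv_row_mx.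
have : enorm (row_mx a b) ^+ 2 <= (enorm a + enorm b) ^+ 2 by nra.
by rewrite ler_pXn2r // ?nnegrE; lra.
Qed.

End Row.
Section Anal.
Variable R : realType.
Variable n : nat.
Local Open Scope classical_set_scope.

Lemma lsc_nbhs (f : 'rV[R]_n -> \bar R) p : lsc_at f p ->
  forall a : R, (a%:E < f p)%E -> \forall x \near p, (a%:E < f x)%E.
Proof.
move=> H a ha; have [d [d0 hd]] := H a ha.
have N0 : 0 <= (n%:R : R) by [].
have e0 : 0 < d / (n%:R + 1) by apply: divr_gt0 => //; lra.
apply/nbhs_ballP; exists (d / (n%:R + 1)) => // x bx; apply: hd.
have hc : forall i, `|(x - p) 0 i| <= d / (n%:R + 1).
  move=> i; rewrite !mxE distrC; move: bx => [_ /(_ 0 i)].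
  by rewrite /ball /= => /ltW.
have h1 := enorm_coord_bound hc.
have g := enorm_ge0 (x - p).
set e := d / (n%:R + 1) in e0 h1.
have de : d = e * (n%:R + 1) by rewrite /e mulfVK //; lra.
rewrite de; nra.
Qed.

Lemma exists_min (K : set 'rV[R]_n) (f : 'rV[R]_n -> \bar R) (x0 : 'rV[R]_n) (L : R) :
  compact K -> K x0 -> (f x0 < +oo)%E -> (forall x, K x -> (L%:E <= f x)%E) ->
  (forall p, K p -> forall a : R, (a%:E < f p)%E -> \forall x \near p, (a%:E < f x)%E) ->
  exists2 u, K u & forall x, K x -> (f u <= f x)%E.
Proof.
move=> cK Kx0 fx0 fL flsc.
set m := ereal_inf (f @` K).
have mle : forall x, K x -> (m <= f x)%E.
  by move=> x Kx; apply: ereal_inf_lbound; exists x.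
have mL : (L%:E <= m)%E by apply/ereal_infP => _ [x Kx <-]; exact: fL.
have mfin : m \is a fin_num.
  rewrite fin_numE; apply/andP; split.
    by apply/negP => /eqP h; move: mL; rewrite h.
  by apply/negP => /eqP h; have := mle _ Kx0; rewrite h leye_eq => /eqP h2; move: fx0; rewrite h2 ltxx.
set m' := fine m.
have mE : m = m'%:E by rewrite /m' fineK.
pose B := fun k : nat => K `&` [set x | (f x < (m' + k.+1%:R^-1)%:E)%E].
pose F := filter_from [set: nat] B.
have FF : Filter F.
  apply: filter_from_filter; first by exists 0%N.
  move=> i j _ _; exists (maxn i j) => // x [Kx fx]; split; split => //.
    apply: lt_le_trans fx _; rewrite lee_fin lerD2l lef_pV2 ?posrE ?ler_nat //.
    by rewrite ltnS leq_maxl.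
  apply: lt_le_trans fx _; rewrite lee_fin lerD2l lef_pV2 ?posrE ?ler_nat //.
  by rewrite ltnS leq_maxr.
have PF : ProperFilter F.
  apply: filter_from_proper => k _.
  have : (m < (m' + k.+1%:R^-1)%:E)%E by rewrite mE lte_fin ltrDl invr_gt0.
  by move/ereal_inf_lt => [_ [x Kx <-] h]; exists x.
have FK : F K by exists 0%N => // x [].
have [p [Kp clp]] := cK F PF FK.
exists p => // x Kx; apply: le_trans (mle x Kx).
rewrite leNgt; apply/negP => hp.
have [a [ha1 ha2]] : exists a : R, (m < a%:E)%E /\ (a%:E < f p)%E.
  have := fL _ Kp; case: (f p) hp => [r| |] //= hp _.
    by exists ((m' + r) / 2); rewrite mE !lte_fin in hp *; split; lra.
  by exists (m' + 1); rewrite mE lte_fin ltey; split => //; lra.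
have [k hk] : exists k : nat, m' + k.+1%:R^-1 < a by apply: ltr_add_invr; rewrite -lte_fin -mE.
have Fk : F (B k) by exists k.
have [y [[Ky fy] fy2]] := clp _ _ Fk (flsc p Kp a ha2).
have hk' : ((m' + k.+1%:R^-1)%:E < a%:E)%E by rewrite lte_fin.
have := lt_trans fy (lt_trans hk' fy2).
by rewrite ltxx.
Qed.

End Anal.
Section Main1.
Variable R : realType.
Variable n : nat.
Local Open Scope classical_set_scope.

Lemma box_enorm (u : 'rV[R]_n) d : 0 < d -> (forall i, `|u 0 i| <= d / (n%:R + 1)) -> enorm u < d.
Proof.
move=> d0 hc.
have N0 : 0 <= (n%:R : R) by [].
have h1 := enorm_coord_bound hc.
have g := enorm_ge0 u.
have e0 : 0 < d / (n%:R + 1) by apply: divr_gt0 => //; lra.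
set e := d / (n%:R + 1) in e0 h1.
have de : d = e * (n%:R + 1) by rewrite /e mulfVK //; lra.
rewrite de; nra.
Qed.

Lemma sq_lower (x p y : 'rV[R]_n) :
  enorm (p - y) ^+ 2 - 2 * (enorm (x - p) * enorm (p - y)) <= enorm (x - y) ^+ 2.
Proof.
have -> : x - y = (x - p) + (p - y) by rewrite addrA subrK.
rewrite (enormD_sq (x - p) (p - y)).
have := cauchy_schwarz (- (x - p)) (p - y); rewrite enormN dotvNl.
have := sqr_ge0 (enorm (x - p)); lra.
Qed.

Lemma lsc_add_q (phi : 'rV[R]_n -> \bar R) p y lam : 0 < lam -> phi p != -oo%E ->
  lsc_at phi p -> lsc_at (fun x => (phi x + (enorm (x - y) ^+ 2 / (2 * lam))%:E)%E) p.
Proof.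
move=> l0 hp H a ha.
set Q := enorm (p - y) ^+ 2 / (2 * lam) in ha.
have [g [b [g0 [hb1 hb2]]]] : exists g b : R, [/\ 0 < g, (b%:E < phi p)%E & a = b + Q - g].
  move: ha hp; case: (phi p) => [r| |] //= ha _.
    rewrite -EFinD lte_fin in ha.
    exists ((r + Q - a) / 2), ((a - Q + r) / 2); rewrite lte_fin; split => //; lra.
  by exists 1, (a - Q + 1); split => //; rewrite ?ltry //; lra.
have [d1 [d10 hd1]] := H b hb1.
have P0 := enorm_ge0 (p - y).
set d2 := g * lam / (enorm (p - y) + 1).
have d20 : 0 < d2 by rewrite /d2; apply: divr_gt0; [exact: mulr_gt0| lra].
exists (Num.min d1 d2); split; first by rewrite lt_min d10 d20.
move=> x; rewrite lt_min => /andP[hx1 hx2].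
have phx := hd1 x hx1.
have hq : Q - g < enorm (x - y) ^+ 2 / (2 * lam).
  have := sq_lower x p y.
  have X0 := enorm_ge0 (x - p).
  have : enorm (x - p) * (enorm (p - y) + 1) < g * lam.
    by move: hx2; rewrite /d2 ltr_pdivlMr; lra.
  rewrite /Q => h1 h2.
  rewrite ltr_pdivlMr; last lra.
  rewrite mulrBl mulfVK; last lra.
  nra.
move: phx; case: (phi x) => [r| |] //= hr.
  rewrite -EFinD lte_fin; rewrite lte_fin in hr; lra.
by rewrite ltry.
Qed.

End Main1.
Section Main1b.
Variable R : realType.
Variable n : nat.
Local Open Scope classical_set_scope.

Lemma lim_const (phi : 'rV[R]_n -> \bar R) u v : reg_subdiff phi u v -> lim_subdiff phi u v.
Proof.
move=> [hf hr]; split => //; exists (fun _ => u), (fun _ => v); split => //.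
split; first by move=> e e0; exists 0%N => k _; rewrite subrr enorm0.
split; first by move=> e e0; exists 0%N => k _; rewrite subrr enorm0.
move=> e e0; exists 0%N => k _.
by rewrite subee // abse0 lte_fin.
Qed.

Lemma normal_step (phi : 'rV[R]_n -> \bar R) xbar w z :
  comb_subdiff2 phi xbar 0 w z -> forall eta, 0 < eta ->
  exists2 r, 0 < r & forall u v, lim_subdiff phi u v ->
    enorm (u - xbar) + enorm v < r ->
    dotv z (u - xbar) - dotv w v <= eta * (enorm (u - xbar) + enorm v).
Proof.
move=> [Hf H] eta heta.
have [r [r0 Hr]] := H eta heta.
exists r => // u v Huv hs.
set F := (fun x : 'rV[R]_n => [set v0 | lim_subdiff phi x v0]).
have Gp : gph F (row_mx u v) by exists u, v.
have Ip : indic (gph F) (row_mx u v) = 0%E by rewrite /indic mem_set.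
have I0 : indic (gph F) (row_mx xbar 0) = 0%E.
  by move: Hf; rewrite /indic; case: ifP.
have D : row_mx u v - row_mx xbar 0 = row_mx (u - xbar) v.
  by rewrite opp_row_mx add_row_mx oppr0 addr0.
have E : dotv (row_mx z (- w)) (row_mx (u - xbar) v) = dotv z (u - xbar) - dotv w v.
  by rewrite dotv_row_mx dotvNl.
have g0 := enorm_ge0 (row_mx (u - xbar) v).
have g1 := enorm_row_mx (u - xbar) v.
have [Z|P] := eqVneq (enorm (row_mx (u - xbar) v)) 0.
  have := cauchy_schwarz (row_mx z (- w)) (row_mx (u - xbar) v).
  rewrite Z mulr0 E => h; apply: le_trans h _.
  apply: mulr_ge0; [exact: ltW| apply: addr_ge0; exact: enorm_ge0].
have := Hr (row_mx u v); rewrite D Ip I0 add0e lee_fin E => h.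
have := h (ltac:(apply/andP; split; [rewrite lt0r P g0 // | lra])).
move=> h2; apply: le_trans (_ : _ <= eta * enorm (row_mx (u - xbar) v)) _.
  lra.
by rewrite ler_pM2l.
Qed.

End Main1b.
Section Main2.
Variable R : realType.
Variable n : nat.
Local Open Scope classical_set_scope.
Variable phi : 'rV[R]_n -> \bar R.
Variable xbar : 'rV[R]_n.
Hypothesis Hinf : forall x, phi x != -oo%E.
Hypothesis Hfin : phi xbar \is a fin_num.
Variables dm e1 lam : R.
Hypothesis Hdm : 0 < dm.
Hypothesis Hlm : forall x, enorm (x - xbar) < dm -> (phi xbar <= phi x)%E.
Hypothesis He1 : 0 < e1.
Hypothesis Hlsc : forall x, enorm (x - xbar) < e1 -> lsc_at phi x.
Hypothesis Hlam : 0 < lam.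

Let R0 := Num.min dm e1.
Let rho := R0 / (n%:R + 1).
Let K := [set v : 'rV[R]_n | forall i, v ord0 i \in `[xbar ord0 i - rho, xbar ord0 i + rho]%R].
Definition hq (y x : 'rV[R]_n) : \bar R := (phi x + (enorm (x - y) ^+ 2 / (2 * lam))%:E)%E.
Let phib := fine (phi xbar).

Lemma R0_gt0 : 0 < R0. Proof. by rewrite /R0 lt_min Hdm He1. Qed.
Lemma rho_gt0 : 0 < rho.
Proof. have := R0_gt0; have : 0 <= (n%:R : R) by []. rewrite /rho => *; apply: divr_gt0 => //; lra. Qed.

Lemma ord1_0 : (0 : 'I_1) = ord0. Proof. by apply/val_inj. Qed.

Lemma K_enorm v : K v -> enorm (v - xbar) < R0.
Proof.
move=> Kv; apply: box_enorm; first exact: R0_gt0.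
move=> i; rewrite !mxE ord1_0; have := Kv i; rewrite in_itv /= => /andP[h1 h2].
rewrite ler_norml -/rho; apply/andP; split; lra.
Qed.

Lemma enorm_K v : enorm (v - xbar) <= rho -> K v.
Proof.
move=> h i; have := enorm_coord (v - xbar) i; rewrite !mxE ord1_0 => h2.
have := le_trans h2 h; rewrite ler_norml => /andP[h3 h4].
rewrite in_itv /=; apply/andP; split; lra.
Qed.

Lemma K_compact : compact K.
Proof.
have H := @rV_compact R n (fun i => `[xbar ord0 i - rho, xbar ord0 i + rho]%classic) (fun i => @segment_compact R (xbar ord0 i - rho) (xbar ord0 i + rho)).
exact: H.
Qed.

Lemma K_lm v : K v -> (phi xbar <= phi v)%E.
Proof. move=> /K_enorm h; apply: Hlm; apply: lt_le_trans h _; by rewrite /R0 ge_min lexx. Qed.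

Lemma K_lsc v : K v -> lsc_at phi v.
Proof. move=> /K_enorm h; apply: Hlsc; apply: lt_le_trans h _; by rewrite /R0 ge_min lexx orbT. Qed.

Lemma K_xbar : K xbar.
Proof. apply: enorm_K; rewrite subrr enorm0; exact/ltW/rho_gt0. Qed.

Lemma phibE : phi xbar = phib%:E. Proof. by rewrite /phib fineK. Qed.

Lemma exists_minimizer y : exists2 u, K u & forall x, K x -> (hq y u <= hq y x)%E.
Proof.
apply: (@exists_min R n K (hq y) xbar phib K_compact K_xbar).
- by rewrite /hq phibE -EFinD ltry.
- move=> x Kx; rewrite -phibE; apply: le_trans (K_lm Kx) _; apply: leeDl.
  rewrite lee_fin; apply: divr_ge0; [exact: sqr_ge0| apply: mulr_ge0 => //; exact: ltW].
- move=> p Kp; apply: lsc_nbhs; apply: lsc_add_q => //; exact: K_lsc.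
Qed.


Lemma hq_ge y u : K u -> (phi xbar <= hq y u)%E.
Proof.
move=> Ku; apply: le_trans (K_lm Ku) _; apply: leeDl.
rewrite lee_fin; apply: divr_ge0; [exact: sqr_ge0| apply: mulr_ge0 => //; exact: ltW].
Qed.

Lemma minimizer_props y u : enorm (y - xbar) < rho / 4 -> K u ->
  (forall x, K x -> (hq y u <= hq y x)%E) ->
  [/\ phi u \is a fin_num, enorm (u - y) <= enorm (xbar - y),
      enorm (u - xbar) <= 2 * enorm (y - xbar) & reg_subdiff phi u (lam^-1 *: (y - u))].
Proof.
move=> hy Ku hmin.
have hl := Hlam.
have hux := hmin _ K_xbar.
have hlm := K_lm Ku.
have ufin : phi u \is a fin_num.
  rewrite fin_numE Hinf /=; apply/negP => /eqP hu.
  by move: hux; rewrite /hq hu phibE -EFinD /= leye_eq.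
set pu := fine (phi u).
have puE : phi u = pu%:E by rewrite /pu fineK.
move: hux hlm; rewrite /hq puE phibE -!EFinD !lee_fin => hux hlm.
have g1 := enorm_ge0 (u - y); have g2 := enorm_ge0 (xbar - y).
have h1 : enorm (u - y) <= enorm (xbar - y).
  have : enorm (u - y) ^+ 2 / (2 * lam) <= enorm (xbar - y) ^+ 2 / (2 * lam) by lra.
  rewrite ler_pM2r ?invr_gt0 ?mulr_gt0 // ler_pXn2r ?nnegrE //.
have h2 : enorm (u - xbar) <= 2 * enorm (y - xbar).
  have -> : u - xbar = (u - y) + (y - xbar) by rewrite addrA subrK.
  apply: le_trans (enormD _ _) _; rewrite (enormB xbar y) in h1; lra.
split => //.
split => // eps heps.
have r0 := rho_gt0.
exists (Num.min (rho / 2) (2 * lam * eps)); split.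
  by rewrite lt_min; apply/andP; split; [apply: divr_gt0 | apply: mulr_gt0 => //; apply: mulr_gt0].
move=> x /andP[_]; rewrite lt_min => /andP[hx1 hx2].
have Kx : K x.
  apply: enorm_K.
  have -> : x - xbar = (x - u) + (u - xbar) by rewrite addrA subrK.
  apply: le_trans (enormD _ _) _; lra.
have := hmin _ Kx; rewrite /hq puE.
case E : (phi x) => [px| |]; last by move: (Hinf x); rewrite E.
  2: by move=> _; rewrite leey.
rewrite -!EFinD !lee_fin => hh.
set v := lam^-1 *: (y - u).
have key : enorm (x - y) ^+ 2 / (2 * lam) - enorm (u - y) ^+ 2 / (2 * lam)
    = enorm (x - u) ^+ 2 / (2 * lam) - dotv v (x - u).
  have -> : x - y = (x - u) + (u - y) by rewrite addrA subrK.
  rewrite (enormD_sq (x - u) (u - y)) /v dotvZl.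
  have -> : y - u = - (u - y) by rewrite opprB.
  rewrite dotvNl (dotvC (u - y)); field; apply/eqP; lra.
have g3 := enorm_ge0 (x - u).
have : enorm (x - u) ^+ 2 / (2 * lam) <= eps * enorm (x - u).
  rewrite ler_pdivrMr ?mulr_gt0 //; nra.
lra.
Qed.

Variables z w : 'rV[R]_n.
Let w' := w + lam *: z.
Let c := - dotv z w'.
Hypothesis Hc : 0 < c.
Hypothesis Hnorm : forall eta, 0 < eta -> exists2 r, 0 < r & forall u v, lim_subdiff phi u v ->
    enorm (u - xbar) + enorm v < r ->
    dotv z (u - xbar) - dotv w v <= eta * (enorm (u - xbar) + enorm v).

Lemma chain_false : False.
Proof.
have hl := Hlam; have hc := Hc; have r0 := rho_gt0.
set Cw := enorm w'.
have Cw0 : 0 <= Cw by exact: enorm_ge0.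
set C := Cw * (2 + lam^-1).
have il : 0 < lam^-1 by rewrite invr_gt0.
have C0 : 0 <= C by apply: mulr_ge0 => //; lra.
set eta := c / (2 * (C + 1)).
have eta0 : 0 < eta by apply: divr_gt0 => //; lra.
have etaC : eta * C <= c / 2.
  rewrite /eta mulrAC ler_pdivrMr; last lra.
  have : c * C <= c / 2 * (2 * (C + 1)) by nra.
  done.
have [r rp Hr] := Hnorm eta0.
set A := Cw ^+ 2 / (2 * lam).
have A0 : 0 <= A by apply: divr_ge0; [exact: sqr_ge0 | lra].
have X0 : 0 <= 4 * A / c + 1 by apply: addr_ge0 => //; apply: divr_ge0 => //; lra.
set N := Num.Def.archi_bound (4 * A / c + 1).
have HN : 4 * A / c + 1 < N%:R := archi_boundP X0.
have N0 : (0 : R) <= N%:R by [].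
set S := Num.min (rho / 4) r / 2.
have S0 : 0 < S by apply: divr_gt0 => //; rewrite lt_min rp andbT; apply: divr_gt0.
have S1 : S < rho / 4.
  have : Num.min (rho / 4) r <= rho / 4 by rewrite ge_min lexx.
  have : 0 < Num.min (rho / 4) r by rewrite lt_min rp andbT; apply: divr_gt0.
  rewrite /S; lra.
have S2 : S < r.
  have : Num.min (rho / 4) r <= r by rewrite ge_min lexx orbT.
  have : 0 < Num.min (rho / 4) r by rewrite lt_min rp andbT; apply: divr_gt0.
  rewrite /S; lra.
set M := C + Cw + 1.
have M0 : 0 < M by rewrite /M; lra.
set tau := S / ((N%:R + 1) * M).
have tau0 : 0 < tau by apply: divr_gt0 => //; apply: mulr_gt0 => //; lra.
have tauN : forall k, (k <= N)%N -> k%:R * tau * M < S.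
  move=> k kN.
  have kN' : (k%:R : R) <= N%:R by rewrite ler_nat.
  have -> : k%:R * tau * M = S * (k%:R / (N%:R + 1)).
    rewrite /tau; field; apply/andP; split; apply/eqP; lra.
  rewrite -[ltRHS]mulr1 ltr_pM2l // ltr_pdivrMr; lra.
pose y (k : nat) := xbar - (k%:R * tau) *: w'.
have yE : forall k, enorm (y k - xbar) = k%:R * tau * Cw.
  move=> k; rewrite /y addrAC subrr add0r enormN enormZ ger0_norm //.
  by apply: mulr_ge0 => //; exact: ltW.
pose bnd (k : nat) := phib + tau ^+ 2 * (k%:R * A - c / 4 * (k%:R * (k%:R - 1))).
have Q : forall k, (k <= N)%N -> exists u, [/\ K u, forall x, K x -> (hq (y k) u <= hq (y k) x)%E
     & (hq (y k) u <= (bnd k)%:E)%E].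
  elim => [|k IH] kN.
    have [u Ku hu] := exists_minimizer (y 0%N).
    exists u; split => //; apply: le_trans (hu _ K_xbar) _.
    rewrite /hq /y /bnd !mul0r scale0r subr0 subrr enorm0 phibE -EFinD lee_fin.
    rewrite expr0n /= !mul0r !mulr0 !subrr !mulr0; lra.
  have kN' : (k <= N)%N by apply: leq_trans kN.
  have [u [Ku hu hb]] := IH kN'.
  have tk0 : 0 <= k%:R * tau by apply: mulr_ge0 => //; exact: ltW.
  have tkM := tauN k kN'.
  have hy : enorm (y k - xbar) < rho / 4.
    rewrite yE; apply: le_lt_trans S1; apply: le_trans (ltW tkM); rewrite /M.
    apply: ler_wpM2l => //; lra.
  have [ufin h1 h2 hreg] := minimizer_props hy Ku hu.
  set v := lam^-1 *: (y k - u).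
  have hv : lam *: v = y k - u by rewrite /v scalerA mulfV ?scale1r //; lra.
  have nv : enorm v <= lam^-1 * (k%:R * tau * Cw).
    rewrite /v enormZ ger0_norm; last exact: ltW.
    by rewrite ler_pM2l // -yE enormB (enormB xbar) in h1 *.
  have nd : enorm (u - xbar) <= 2 * (k%:R * tau * Cw) by rewrite -yE.
  have dvC : enorm (u - xbar) + enorm v <= k%:R * tau * C.
    rewrite /C; lra.
  have dvr : enorm (u - xbar) + enorm v < r.
    apply: le_lt_trans dvC _; apply: lt_trans S2; apply: le_lt_trans tkM.
    apply: ler_wpM2l => //; rewrite /M; lra.
  have hn := Hr u v (lim_const hreg) dvr.
  have dE : u - xbar = - ((k%:R * tau) *: w') - lam *: v.
    by rewrite hv /y !opprB addrCA addKr.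
  have key : k%:R * tau * (c / 2) <= dotv w' v.
    move: hn; rewrite dE dotvBr dotvNr dotvZr dotvZr.
    rewrite /w' dotvDl dotvZl -/c.
    have : eta * (enorm (u - xbar) + enorm v) <= eta * (k%:R * tau * C) by rewrite ler_pM2l.
    rewrite -dE.
    have : eta * (k%:R * tau * C) <= k%:R * tau * (c / 2).
      by rewrite mulrCA ler_wpM2l.
    rewrite /c; lra.
  have [u' Ku' hu'] := exists_minimizer (y k.+1).
  exists u'; split => //.
  apply: le_trans (hu' _ Ku) _.
  set pu := fine (phi u).
  have puE : phi u = pu%:E by rewrite /pu fineK.
  move: hb; rewrite /hq puE -!EFinD !lee_fin => hb.
  have yS : y k.+1 = y k - tau *: w'.
    by rewrite /y -natr1 mulrDl mul1r scalerDl opprD addrA.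
  have : enorm (u - y k.+1) ^+ 2 = enorm (u - y k) ^+ 2 - 2 * tau * lam * dotv w' v + tau ^+ 2 * Cw ^+ 2.
    have -> : u - y k.+1 = (u - y k) + tau *: w' by rewrite yS opprB addrCA addrC.
    rewrite (enormD_sq (u - y k) (tau *: w')) enormZ (ger0_norm (ltW tau0)).
    have -> : u - y k = - (lam *: v) by rewrite hv (opprB (y k)).
    rewrite dotvNl dotvZl dotvZr (dotvC v) -/Cw; ring.
  move=> ->.
  rewrite /bnd.
  have -> : (enorm (u - y k) ^+ 2 - 2 * tau * lam * dotv w' v + tau ^+ 2 * Cw ^+ 2) / (2 * lam)
     = enorm (u - y k) ^+ 2 / (2 * lam) - tau * dotv w' v + tau ^+ 2 * A.
    rewrite /A; field; apply/eqP; lra.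
  move: hb; rewrite /bnd.
  have : tau * (k%:R * tau * (c / 2)) <= tau * dotv w' v by rewrite ler_pM2l.
  set kk := (k%:R : R).
  move=> h3 h4.
  have ek1 : (k.+1%:R : R) = kk + 1 by rewrite /kk natr1.
  rewrite ek1.
  have -> : phib + tau ^+ 2 * ((kk + 1) * A - c / 4 * ((kk + 1) * (kk + 1 - 1)))
     = phib + tau ^+ 2 * (kk * A - c / 4 * (kk * (kk - 1))) - tau * (kk * tau * (c / 2)) + tau ^+ 2 * A.
    by field.
  lra.
have [u [Ku _ hb]] := Q N (leqnn N).
have := le_trans (hq_ge (y N) Ku) hb.
rewrite phibE lee_fin /bnd => hf.
have t2 : 0 < tau ^+ 2 by apply: exprn_gt0.
have : 0 <= N%:R * A - c / 4 * (N%:R * (N%:R - 1)).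
  by move: hf; rewrite -subr_ge0 addrAC subrr add0r pmulr_rge0.
have : 4 * A < c * (N%:R - 1).
  have : 4 * A / c < N%:R - 1 by lra.
  by rewrite ltr_pdivrMr // [c * _]mulrC.
nra.
Qed.

End Main2.

Theorem theorem4p3 (R : realType) (n : nat) (phi : 'rV[R]_n -> \bar R)
  (xbar : 'rV[R]_n) :
  (forall x, phi x != -oo%E) ->
  phi xbar \is a fin_num ->
  local_minimizer phi xbar ->
  lim_subdiff phi xbar 0 /\
  (prox_regular phi xbar 0 ->
   forall w z : 'rV[R]_n, comb_subdiff2 phi xbar 0 w z -> 0 <= dotv z w).
Proof.
move=> Hinf Hfin [dm [Hdm Hlm]].
have part1 : lim_subdiff phi xbar 0.
  apply: lim_const; split => // eps heps; exists dm; split => // u /andP[_ hu].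
  apply: le_trans (Hlm u hu).
  rewrite dotv0l sub0r -(fineK Hfin) -EFinD lee_fin.
  have := enorm_ge0 (u - xbar); nra.
split => // Hprox w z Hz.
have [_ [[e1 [He1 Hlsc]] _]] := Hprox.
rewrite leNgt; apply/negP => hzw.
have zz := dotv_ge0 z.
set lam := - dotv z w / (2 * (dotv z z + 1)).
have Hlam : 0 < lam by apply: divr_gt0; lra.
have e : lam * dotv z z + lam = - dotv z w / 2.
  by rewrite /lam; field; apply/eqP; lra.
have Hc : 0 < - dotv z (w + lam *: z).
  rewrite dotvDr dotvZr; lra.
exact: (chain_false Hinf Hfin Hdm Hlm He1 Hlsc Hlam Hc (normal_step Hz)).
Qed.
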